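(* Let $|q|>1$, $n\geq 0$, and consider the function \[ \Phi(z;t_r;u_0,u_1)=\prod_{k=0}^{n-1} \frac{1}{(pq^{n-k}z/u_0,\,q^{n-k} /(u_0z);p)}\cdot \frac{1}{(pu_0z/q,\, u_0/(qz),\,pu_1z/q^n,\,u_1/(q^nz) ;p,q^{-1}) \prod_{r=0}^3 (pt_rz/q,\,t_r/(qz) ;p,q^{-1})}. \] Substitute $z\to zp^{\zeta}$, $t_r\to t_rp^{\alpha_r}$ $(0\le r\le 3)$, $u_0\to u_0p^{\alpha_4}$, $u_1\to u_1p^{\alpha_5}$, with $(\alpha;\zeta)=(\alpha_0,\dots,\alpha_5;\zeta)$ in the polytope $P$. Then the leading coefficient (limit as $p\to0$ after rescaling by $p^{-val}$) of the resulting function depends on $z$ only if $\alpha_r+\tfrac12=|\zeta+\tfrac12|$ for some $0\leq r\leq 5$, or $\alpha_4 + |\zeta+\tfrac12| \geq \tfrac12$.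
   Context: For $|a|<1$ write $(x;a)=\prod_{j\ge0}(1-xa^j)$ and $(x;p,a)=\prod_{i,j\ge0}(1-xp^ia^j)$, written multiplicatively (a comma-separated list of arguments denotes the product). Here $0<|p|<1$, and $t_0,\dots,t_3,u_0,u_1,z$ are independent of $p$. Valuation and leading coefficient refer to the expansion in (real) powers of $p$: if $F\sim c\,p^{v}$ with $c\neq 0$ independent of $p$ as $p\to0$, then $val(F)=v$ and $lc(F)=c$. $P$ is the set of $(\alpha_0,\dots,\alpha_5;\zeta)\in\mathbb{R}^7$ satisfying $\sum_{i=0}^5\alpha_i=1$, $|\tfrac12+\zeta|\le\tfrac12$, $|\tfrac12+\zeta|-\tfrac12\le\alpha_i$ for all $i$, $\alpha_i\le 1+\alpha_j$ and $\alpha_i+\alpha_j\le 1$ for all distinct $i,j$, and $\alpha_i+\alpha_j+\alpha_k+|\tfrac12+\zeta|\le\tfrac32$ for all distinct $i,j,k$ (indices in $\{0,\dots,5\}$). *)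

(* Defs.v *)
From HB Require Import structures.
From mathcomp Require Import all_boot all_order all_algebra.
From mathcomp Require Import complex.
From mathcomp Require Import all_classical all_reals all_analysis.
Set Implicit Arguments. Unset Strict Implicit. Unset Printing Implicit Defensive.
Import Order.TTheory GRing.Theory Num.Theory.
Import numFieldNormedType.Exports.
Local Open Scope ring_scope.
Local Open Scope complex_scope.
Local Open Scope classical_set_scope.
Local Open Scope ring_scope.

(* The complex numbers R[i], seen as a numClosedFieldType so that the
   generic norm topology of MathComp-Analysis (modulus topology) applies. *)
Definition Cx (R : realType) : numClosedFieldType := R[i].

Section Defs.
Variable R : realType.
Local Notation C := (Cx R).

Definition qpoch (x a : C) : C :=
  lim ((fun N : nat => \prod_(j < N) (1 - x * a ^+ j)) @ \oo).

Definition qpoch2 (x p a : C) : C :=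
  lim ((fun N : nat => \prod_(i < N) \prod_(j < N) (1 - x * p ^+ i * a ^+ j)) @ \oo).

Definition Phi (n : nat) (p q z : C) (t : 'I_4 -> C) (u0 u1 : C) : C :=
  (\prod_(k < n) (qpoch (p * q ^+ (n - k) * z / u0) p
                  * qpoch (q ^+ (n - k) / (u0 * z)) p))^-1
  * (qpoch2 (p * u0 * z / q) p q^-1 * qpoch2 (u0 / (q * z)) p q^-1
     * qpoch2 (p * u1 * z / q ^+ n) p q^-1 * qpoch2 (u1 / (q ^+ n * z)) p q^-1
     * \prod_(r < 4) (qpoch2 (p * t r * z / q) p q^-1
                      * qpoch2 (t r / (q * z)) p q^-1))^-1.

Definition ord4to6 (r : 'I_4) : 'I_6 := widen_ord (isT : (4 <= 6)%N) r.

Definition cpow (p a : R) : C := ((p `^ a)%:C : R[i]).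

Definition Phi_sub (n : nat) (q z : C) (t : 'I_4 -> C) (u0 u1 : C)
  (alpha : 'I_6 -> R) (zeta : R) (p : R) : C :=
  Phi n (p%:C) q (z * cpow p zeta)
      (fun r => t r * cpow p (alpha (ord4to6 r)))
      (u0 * cpow p (alpha (inord 4))) (u1 * cpow p (alpha (inord 5))).

(* F ~ c p^v as p -> 0+, with c <> 0 : val(F) = v, lc(F) = c *)
Definition has_lc (F : R -> C) (v : R) (c : C) : Prop :=
  c != 0 /\ (F x / cpow x v) @[x --> 0^'+] --> c.

Definition inP (alpha : 'I_6 -> R) (zeta : R) : Prop :=
  [/\ \sum_(i < 6) alpha i = 1,
      `|1/2 + zeta| <= 1/2,
      (forall i, `|1/2 + zeta| - 1/2 <= alpha i),
      (forall i j, i != j -> alpha i <= 1 + alpha j /\ alpha i + alpha j <= 1)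
    & (forall i j k, i != j -> j != k -> i != k ->
         alpha i + alpha j + alpha k + `|1/2 + zeta| <= 3/2)].
End Defs.

(* Main.v *)
Require Import Defs.
From HB Require Import structures.
From mathcomp Require Import all_boot all_order all_algebra.
From mathcomp Require Import complex.
From mathcomp Require Import all_classical all_reals all_analysis.
From mathcomp Require Import ring lra.
Import Order.TTheory GRing.Theory Num.Theory.
Import numFieldNormedType.Exports.
Local Open Scope ring_scope.
Local Open Scope complex_scope.
Local Open Scope classical_set_scope.
Local Open Scope ring_scope.
Section S.
Variable R : realType.
Local Notation C := (Cx R).
Definition nc (z : C) : R := complex.Re `|z|.
Lemma ncE (z : C) : `|z| = (nc z)%:C.
Proof. by rewrite /nc normc_def. Qed.
Lemma nc_ge0 (z : C) : 0 <= nc z.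
Proof. by have := normr_ge0 z; rewrite ncE ler0c. Qed.
Lemma ncM (x y : C) : nc (x * y) = nc x * nc y.
Proof. by apply: complexI; rewrite rmorphM /= -!ncE normrM. Qed.
Lemma ncD (x y : C) : nc (x + y) <= nc x + nc y.
Proof. by have := ler_normD x y; rewrite !ncE -rmorphD lecR. Qed.
Lemma ncN (x : C) : nc (- x) = nc x.
Proof. by apply: complexI; rewrite -!ncE normrN. Qed.
Lemma ncB (x y : C) : nc (x - y) = nc (y - x).
Proof. by rewrite -ncN opprB. Qed.
Lemma nc1 : nc (1 : C) = 1.
Proof. by apply: complexI; rewrite -!ncE normr1. Qed.
Lemma nc0 : nc (0 : C) = 0.
Proof. by apply: complexI; rewrite -!ncE normr0. Qed.
Lemma ncX (x : C) k : nc (x ^+ k) = nc x ^+ k.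
Proof. by apply: complexI; rewrite rmorphXn /= -!ncE normrX. Qed.
Lemma ncR (r : R) : nc (r%:C) = `|r|.
Proof. by rewrite /nc normc_def /= expr0n /= addr0 sqrtr_sqr. Qed.
Lemma ncV (x : C) : nc (x^-1) = (nc x)^-1.
Proof. by apply: complexI; rewrite -!ncE normfV fmorphV /= -ncE. Qed.
Definition Kp (P : C) (S : R) : Prop :=
  0 <= S /\ exists B : R, [/\ 1 <= B, nc (P - 1) <= B - 1 & (S < 1 -> B * (1 - S) <= 1)].

Lemma Kp1 : Kp 1 0.
Proof. split=> //; exists 1; split=> //; rewrite ?subrr ?nc0 ?subrr //.
Qed.

Lemma KpM P1 S1 P2 S2 : Kp P1 S1 -> Kp P2 S2 -> Kp (P1 * P2) (S1 + S2).
Proof.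
move=> [S10 [B1 [B11 H1 H1']]] [S20 [B2 [B21 H2 H2']]].
split; first by rewrite addr_ge0.
exists (B1 * B2); split; first by rewrite -[1]mulr1 ler_pM // ler01.
- have -> : P1 * P2 - 1 = (P1 - 1) * (P2 - 1) + (P1 - 1) + (P2 - 1) by ring.
  apply: (le_trans (ncD _ _)).
  apply: (le_trans (lerD (ncD _ _) (lexx _))).
  rewrite ncM.
  have h1 := nc_ge0 (P1 - 1); have h2 := nc_ge0 (P2 - 1).
  have : nc (P1 - 1) * nc (P2 - 1) <= (B1 - 1) * (B2 - 1).
    by apply: ler_pM.
  lra.
- move=> HS.
  have HS1 : S1 < 1 by lra.
  have HS2 : S2 < 1 by lra.
  have := H1' HS1; have := H2' HS2 => h2 h1.
  have : (B1 * (1 - S1)) * (B2 * (1 - S2)) <= 1 * 1.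
    apply: ler_pM => //; apply: mulr_ge0; lra.
  have : 0 <= B1 * B2 * (S1 * S2) by apply: mulr_ge0; apply: mulr_ge0; lra.
  nra.
Qed.

Lemma Kpw (w : C) : Kp (1 - w) (nc w).
Proof.
split; first exact: nc_ge0.
exists (1 + nc w); split.
- by rewrite lerDl nc_ge0.
- by rewrite addrAC subrr add0r ncN addrAC subrr add0r.
- move=> _; nra.
Qed.

Lemma Kp_mono P S S' : Kp P S -> S <= S' -> Kp P S'.
Proof.
move=> [S0 [B [B1 H H']]] SS; split; first lra.
exists B; split=> // HS; have := H' ltac:(lra); nra.
Qed.

Lemma Kp_bound P S : Kp P S -> S <= 1/2 -> nc (P - 1) <= 2 * S.
Proof.
move=> [S0 [B [B1 H H']]] SS; have := H' ltac:(lra) => h. nra.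
Qed.

Lemma Kp_big (I : Type) (r : seq I) (Pr : pred I) (F : I -> C) (G : I -> R) :
  (forall i, Pr i -> Kp (F i) (G i)) ->
  Kp (\prod_(i <- r | Pr i) F i) (\sum_(i <- r | Pr i) G i).
Proof. by move=> h; apply: (big_ind2 Kp Kp1 KpM). Qed.
Lemma cvgCP (T : Type) (F : set_system T) (FF : Filter F) (f : T -> C) (l : C) :
  f t @[t --> F] --> l <->
  (forall e : R, 0 < e -> \forall t \near F, nc (l - f t) < e).
Proof.
rewrite cvgrPdist_lt; split.
- move=> h e e0; have := h (e%:C); rewrite ltcR => /(_ e0).
  by apply: filterS => t; rewrite ncE ltcR.
- move=> h eps eps0.
  have eR : eps = (complex.Re eps)%:C.
    by apply/esym/RRe_real; rewrite gtr0_real.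
  have e0 : 0 < complex.Re eps by rewrite -ltcR -eR.
  by apply: filterS (h _ e0) => t; rewrite ncE {2}eR ltcR.
Qed.
Lemma nc_ReIm (z : C) : nc z <= `|complex.Re z| + `|complex.Im z|.
Proof.
rewrite /nc normc_def.
set a := complex.Re z; set b := complex.Im z.
have -> : complex.Re ((Num.sqrt (a ^+ 2 + b ^+ 2))%:C) = Num.sqrt (a ^+ 2 + b ^+ 2) by [].
have -> : `|a| + `|b| = Num.sqrt ((`|a| + `|b|) ^+ 2).
  rewrite sqrtr_sqr; apply/esym/ger0_norm; exact: addr_ge0 (normr_ge0 a) (normr_ge0 b).
apply: ler_wsqrtr.
rewrite sqrrD -[a ^+ 2](@real_normK _ a) ?num_real // -[b ^+ 2](@real_normK _ b) ?num_real //.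
have : 0 <= `|a| * `|b| *+ 2 by rewrite mulrn_wge0 // mulr_ge0.
lra.
Qed.
Lemma ReB (x y : C) : complex.Re (x - y) = complex.Re x - complex.Re y.
Proof. by case: x => a b; case: y. Qed.
Lemma ImB (x y : C) : complex.Im (x - y) = complex.Im x - complex.Im y.
Proof. by case: x => a b; case: y. Qed.
Lemma nc_Re (z : C) : `|complex.Re z| <= nc z.
Proof. by have := normc_ge_Re z; rewrite ncE lecR. Qed.
Lemma nc_Im (z : C) : `|complex.Im z| <= nc z.
Proof.
have := normc_ge_Re (z * (- 'i)); rewrite ncE lecR ncM ncN.
have -> : nc ('i : C) = 1.
  by rewrite /nc normc_def /= expr0n /= add0r expr1n sqrtr1.
rewrite mulr1.
suff -> : complex.Re (z * - 'i) = complex.Im z by [].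
by case: z => a b /=; rewrite oppr0 mulr0 mulrN1 opprK add0r.
Qed.
Lemma cauchyC (u : nat -> C) :
  (forall e : R, 0 < e -> exists N, forall M, (N <= M)%N -> nc (u M - u N) <= e) ->
  exists L : C, u n @[n --> \oo] --> L.
Proof.
move=> hc.
have hRe : cvg ((fun n => complex.Re (u n)) @ \oo).
  apply/cauchy_cvgP/cauchy_exP => e e0.
  have [N hN] := hc (e / 2) ltac:(by rewrite divr_gt0).
  exists (complex.Re (u N)); exists N => // M /= HM.
  rewrite -ball_normE /= -normrN opprB -ReB.
  apply: (le_lt_trans (nc_Re _)); apply: (le_lt_trans (hN M HM)).
  by rewrite ltr_pdivrMr // ltr_pMr // ltr1n.
have hIm : cvg ((fun n => complex.Im (u n)) @ \oo).
  apply/cauchy_cvgP/cauchy_exP => e e0.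
  have [N hN] := hc (e / 2) ltac:(by rewrite divr_gt0).
  exists (complex.Im (u N)); exists N => // M /= HM.
  rewrite -ball_normE /= -normrN opprB -ImB.
  apply: (le_lt_trans (nc_Im _)); apply: (le_lt_trans (hN M HM)).
  by rewrite ltr_pdivrMr // ltr_pMr // ltr1n.
set lr := lim _ in hRe; set li := lim _ in hIm.
exists (lr +i* li).
apply/cvgCP => e e0.
move/cvgrPdist_lt : hRe => /(_ (e/2) ltac:(by rewrite divr_gt0)) hR.
move/cvgrPdist_lt : hIm => /(_ (e/2) ltac:(by rewrite divr_gt0)) hI.
near=> n.
apply: (le_lt_trans (nc_ReIm _)).
have h1 : `|lr - complex.Re (u n)| < e / 2 by near: n.
have h2 : `|li - complex.Im (u n)| < e / 2 by near: n.
rewrite ReB ImB /=.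
lra.
Unshelve. all: by end_near.
Qed.
Lemma lim_bound (P : nat -> C) (L : C) (c : R) :
  P n @[n --> \oo] --> L -> (forall N, nc (P N - 1) <= c) -> nc (L - 1) <= c.
Proof.
move=> /cvgCP hL hb; apply/ler_addgt0Pr => e e0.
have [N _ hN] := hL e e0.
have := hN N (leqnn N) => /= h.
have -> : L - 1 = (L - P N) + (P N - 1) by ring.
apply: (le_trans (ncD _ _)); have := hb N; lra.
Qed.

Lemma prodlim (P : nat -> C) (S : R) (T : nat -> R) :
  S <= 1/2 -> (forall N, Kp (P N) S) ->
  (forall N M, (N <= M)%N -> exists Rm, P M = P N * Rm /\ Kp Rm (T N)) ->
  (forall e : R, 0 < e -> exists N, T N <= e) ->
  nc (lim (P n @[n --> \oo]) - 1) <= 2 * S.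
Proof.
move=> S12 hK hM hT.
have hb N : nc (P N - 1) <= 2 * S by apply: Kp_bound.
have hS0 : 0 <= S by case: (hK 0%N).
have [L hL] : exists L : C, P n @[n --> \oo] --> L.
  apply: cauchyC => e e0.
  have [N hN] := hT (Num.min (1/2) (e/4)) ltac:(by rewrite lt_min; apply/andP; split; lra).
  exists N => M NM.
  have [Rm [-> hR]] := hM N M NM.
  have hN1 : T N <= 1/2 by move: hN; rewrite le_min => /andP[].
  have hN2 : T N <= e/4 by move: hN; rewrite le_min => /andP[].
  have h1 := @Kp_bound Rm (T N) hR hN1.
  have -> : P N * Rm - P N = P N * (Rm - 1) by ring.
  rewrite ncM.
  have hPN : nc (P N) <= 2.
    have -> : P N = (P N - 1) + 1 by ring.
    apply: (le_trans (ncD _ _)); rewrite nc1; have := hb N; lra.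
  have : nc (P N) * nc (Rm - 1) <= 2 * (2 * T N) by apply: ler_pM; rewrite ?nc_ge0.
  lra.
rewrite (cvg_lim _ hL) //.
exact: lim_bound hL hb.
Qed.
Lemma geo_le (r : R) (N M : nat) : 0 < r -> r < 1 ->
  \sum_(N <= j < M) r ^+ j <= r ^+ N / (1 - r).
Proof.
move=> r0 r1.
case: (leqP N M) => NM.
- rewrite -(subnKC NM) geometric_partial_tail.
  apply: geometric_le_lim => //; first exact: exprn_ge0 (ltW r0).
  by rewrite gtr0_norm.
- rewrite big_geq ?(ltnW NM) //; apply: divr_ge0; first exact: exprn_ge0 (ltW r0).
  lra.
Qed.
Lemma geo_small (a r : R) : 0 <= r -> r < 1 -> forall e : R, 0 < e -> exists N, a * r ^+ N <= e.
Proof.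
move=> r0 r1 e e0.
have := @cvg_geometric R a r ltac:(by rewrite ger0_norm).
move/cvgrPdist_lt => /(_ e e0) [N _ hN].
exists N; have := hN N (leqnn N); rewrite /= sub0r normrN => h.
exact: le_trans (ler_norm _) (ltW h).
Qed.

Lemma dsum_le (c p r : R) (N1 M1 N2 M2 : nat) : 0 <= c -> 0 < p -> p < 1 -> 0 < r -> r < 1 ->
  \sum_(N1 <= i < M1) \sum_(N2 <= j < M2) c * p ^+ i * r ^+ j
  <= c * (p ^+ N1 / (1 - p)) * (r ^+ N2 / (1 - r)).
Proof.
move=> c0 p0 p1 r0 r1.
have hr : 0 <= r ^+ N2 / (1 - r) by apply: divr_ge0; [exact: exprn_ge0 (ltW r0)|lra].
apply: (@le_trans _ _ (\sum_(N1 <= i < M1) c * p ^+ i * (r ^+ N2 / (1 - r)))).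
  apply: ler_sum => i _; rewrite -mulr_sumr; apply: ler_wpM2l.
    by apply: mulr_ge0 => //; exact: exprn_ge0 (ltW p0).
  exact: geo_le.
rewrite -mulr_suml -mulr_sumr; apply: ler_wpM2r => //; apply: ler_wpM2l => //.
exact: geo_le.
Qed.

Lemma sum_le1 (c p : R) (N M : nat) : 0 <= c -> 0 < p -> p < 1 ->
  \sum_(N <= i < M) c * p ^+ i <= c * (p ^+ N / (1 - p)).
Proof.
move=> c0 p0 p1; rewrite -mulr_sumr; apply: ler_wpM2l => //; exact: geo_le.
Qed.
Lemma nc_term1 (x : C) (p : R) j : 0 <= p -> nc (x * p%:C ^+ j) = nc x * p ^+ j.
Proof. by move=> p0; rewrite ncM ncX ncR ger0_norm. Qed.

Lemma qpoch_bound (x : C) (p : R) : 0 < p -> p < 1 -> nc x / (1 - p) <= 1/2 ->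
  nc (qpoch x p%:C - 1) <= 2 * (nc x / (1 - p)).
Proof.
move=> p0 p1 hS; rewrite /qpoch.
have hc := nc_ge0 x.
have ek K : \prod_(j < K) (1 - x * p%:C ^+ j) = \prod_(0 <= j < K) (1 - x * p%:C ^+ j).
  by rewrite -(big_mkord xpredT (fun j => 1 - x * p%:C ^+ j)).
have hk N1 M1 := @Kp_big nat (index_iota N1 M1) xpredT (fun j => 1 - x * p%:C ^+ j)
     (fun j => nc (x * p%:C ^+ j)) (fun j _ => Kpw _).
apply: (@prodlim _ _ (fun N => nc x * (p ^+ N / (1 - p)))) => //.
- move=> N /=; rewrite ek.
  eapply Kp_mono; first exact: (hk 0%N N).
  rewrite (eq_bigr (fun j => nc x * p ^+ j)); last by move=> j _; rewrite nc_term1 // ltW.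
  by have := @sum_le1 (nc x) p 0 N hc p0 p1; rewrite expr0 mulrA mulr1.
- move=> N M NM /=; rewrite !ek (big_cat_nat (leq0n N) NM) /=.
  eexists; split; first reflexivity.
  eapply Kp_mono; first exact: (hk N M).
  rewrite (eq_bigr (fun j => nc x * p ^+ j)); last by move=> j _; rewrite nc_term1 // ltW.
  exact: sum_le1.
- move=> e e0.
  have [N hN] := @geo_small (nc x / (1 - p)) p (ltW p0) p1 e e0.
  by exists N; rewrite mulrA mulrAC.
Qed.
Lemma qpoch2_bound (x a : C) (p : R) : 0 < p -> p < 1 -> 0 < nc a -> nc a < 1 ->
  nc x / ((1 - p) * (1 - nc a)) <= 1/2 ->
  nc (qpoch2 x p%:C a - 1) <= 2 * (nc x / ((1 - p) * (1 - nc a))).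
Proof.
move=> p0 p1 r0 r1 hS; rewrite /qpoch2.
set c := nc x; set r := nc a.
have hc : 0 <= c := nc_ge0 x.
set f := fun i j : nat => 1 - x * p%:C ^+ i * a ^+ j.
have ek K : \prod_(i < K) \prod_(j < K) (1 - x * p%:C ^+ i * a ^+ j)
    = \prod_(0 <= i < K) \prod_(0 <= j < K) f i j.
  rewrite (eq_bigr (fun i : 'I_K => \prod_(0 <= j < K) f i j)); last first.
    by move=> i _; rewrite -(big_mkord xpredT (fun j => f i j)).
  by rewrite -(big_mkord xpredT (fun i => \prod_(0 <= j < K) f i j)).
have nt i j : nc (x * p%:C ^+ i * a ^+ j) = c * p ^+ i * r ^+ j.
  by rewrite !ncM !ncX ncR ger0_norm // ltW.
have hk N1 M1 N2 M2 : Kp (\prod_(N1 <= i < M1) \prod_(N2 <= j < M2) f i j)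
    (\sum_(N1 <= i < M1) \sum_(N2 <= j < M2) c * p ^+ i * r ^+ j).
  apply: Kp_big => i _; apply: Kp_big => j _.
  by rewrite -nt; exact: Kpw.
have hS' : nc x / ((1 - p) * (1 - nc a)) = c * (p ^+ 0 / (1 - p)) * (r ^+ 0 / (1 - r)).
  rewrite !expr0 invfM; rewrite /c /r; ring.
rewrite hS'; rewrite hS' in hS.
apply: (@prodlim _ _ (fun N => c * (p ^+ 0 / (1 - p)) * (r ^+ N / (1 - r))
                              + c * (p ^+ N / (1 - p)) * (r ^+ 0 / (1 - r)))) => //.
- move=> N /=; rewrite ek.
  eapply Kp_mono; first exact: (hk 0%N N 0%N N).
  exact: dsum_le.
- move=> N M NM /=; rewrite !ek.
  have eq : \prod_(0 <= i < M) \prod_(0 <= j < M) f i j =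
      \prod_(0 <= i < N) \prod_(0 <= j < N) f i j *
      ((\prod_(0 <= i < N) \prod_(N <= j < M) f i j) *
       (\prod_(N <= i < M) \prod_(0 <= j < M) f i j)).
    rewrite (big_cat_nat (leq0n N) NM) /= mulrA; congr (_ * _).
    rewrite -big_split /=; apply: eq_bigr => i _.
    by rewrite (big_cat_nat (leq0n N) NM).
  eexists; split; first exact: eq.
  apply: KpM.
    eapply Kp_mono; first exact: (hk 0%N N N M).
    exact: dsum_le.
  eapply Kp_mono; first exact: (hk N M 0%N M).
  exact: dsum_le.
- move=> e e0.
  have e20 : 0 < e / 2 by rewrite divr_gt0.
  have [N1 hN1] := @geo_small (c * (p ^+ 0 / (1 - p)) / (1 - r)) r (ltW r0) r1 _ e20.
  have [N2 hN2] := @geo_small (c * (r ^+ 0 / (1 - r)) / (1 - p)) p (ltW p0) p1 _ e20.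
  exists (maxn N1 N2).
  have h1 : c * (p ^+ 0 / (1 - p)) * (r ^+ maxn N1 N2 / (1 - r)) <= e / 2.
    apply: le_trans hN1; rewrite mulrA mulrAC.
    apply: ler_wpM2l.
      apply: divr_ge0; [apply: mulr_ge0 => //; apply: divr_ge0; rewrite ?expr0 //; lra|lra].
    by apply: ler_wiXn2l; [exact: ltW|exact: ltW|exact: leq_maxl].
  have h2 : c * (p ^+ maxn N1 N2 / (1 - p)) * (r ^+ 0 / (1 - r)) <= e / 2.
    apply: le_trans hN2.
    have -> : c * (p ^+ maxn N1 N2 / (1 - p)) * (r ^+ 0 / (1 - r)) =
       c * (r ^+ 0 / (1 - r)) / (1 - p) * p ^+ maxn N1 N2 by rewrite /c; ring.
    apply: ler_wpM2l.
      apply: divr_ge0; [apply: mulr_ge0 => //; apply: divr_ge0; rewrite ?expr0 //; lra|lra].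
    by apply: ler_wiXn2l; [exact: ltW|exact: ltW|exact: leq_maxr].
  lra.
Qed.
Lemma qpoch2_to1 (X : R -> C) (a : C) : 0 < nc a -> nc a < 1 ->
  X p @[p --> 0^'+] --> (0 : C) -> qpoch2 (X p) p%:C a @[p --> 0^'+] --> (1 : C).
Proof.
move=> r0 r1 /cvgCP hX; apply/cvgCP => e e0.
set d := 1 - nc a.
have d0 : 0 < d by rewrite /d; lra.
set m := Num.min (1/4 : R) (e/8).
have m0 : 0 < m by rewrite lt_min; apply/andP; split; lra.
have m1 : m <= 1/4 by rewrite ge_min lexx.
have m2 : m <= e/8 by rewrite ge_min lexx orbT.
have := hX (d * m) (mulr_gt0 d0 m0).
have hp0 := @nbhs_right_gt R 0.
have hp1 := @nbhs_right_lt R 0 (1/2) ltac:(lra).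
move=> hx; near=> p.
have p0 : 0 < p by near: p.
have p1 : p < 1/2 by near: p.
have hxp : nc (0 - X p) < d * m by near: p.
rewrite sub0r ncN in hxp.
have hxg := nc_ge0 (X p).
have dp : 0 < (1 - p) * d by apply: mulr_gt0 => //; lra.
have hS : nc (X p) / ((1 - p) * (1 - nc a)) <= 1/2.
  rewrite -/d ler_pdivrMr //.
  have : d * m <= d * (1/4) by apply: ler_wpM2l; lra.
  have : 0 <= d * (1/2 - p) by apply: mulr_ge0; lra.
  nra.
have p1' : p < 1 by lra.
rewrite ncB; apply: le_lt_trans (@qpoch2_bound (X p) a p p0 p1' r0 r1 hS) _.
rewrite -/d; rewrite mulrA ltr_pdivrMr //.
have : d * m <= d * (e / 8) by apply: ler_wpM2l; lra.
have : 0 <= e * d * (1/2 - p) by apply: mulr_ge0; [apply: mulr_ge0|]; lra.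
nra.
Unshelve. all: by end_near.
Qed.

Lemma qpoch_to1 (X : R -> C) :
  X p @[p --> 0^'+] --> (0 : C) -> qpoch (X p) p%:C @[p --> 0^'+] --> (1 : C).
Proof.
move=> /cvgCP hX; apply/cvgCP => e e0.
set m := Num.min (1/4 : R) (e/8).
have m0 : 0 < m by rewrite lt_min; apply/andP; split; lra.
have m1 : m <= 1/4 by rewrite ge_min lexx.
have m2 : m <= e/8 by rewrite ge_min lexx orbT.
have := hX m m0.
have hp0 := @nbhs_right_gt R 0.
have hp1 := @nbhs_right_lt R 0 (1/2) ltac:(lra).
move=> hx; near=> p.
have p0 : 0 < p by near: p.
have p1 : p < 1/2 by near: p.
have hxp : nc (0 - X p) < m by near: p.
rewrite sub0r ncN in hxp.
have hxg := nc_ge0 (X p).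
have dp : 0 < (1 - p) by lra.
have hS : nc (X p) / (1 - p) <= 1/2.
  rewrite ler_pdivrMr //. nra.
have p1' : p < 1 by lra.
rewrite ncB; apply: le_lt_trans (@qpoch_bound (X p) p p0 p1' hS) _.
rewrite mulrA ltr_pdivrMr //.
nra.
Unshelve. all: by end_near.
Qed.
Lemma cpowD (p a b : R) : 0 < p -> cpow p (a + b) = cpow p a * cpow p b.
Proof.
move=> p0; rewrite /cpow powRD; last by rewrite (gt_eqF p0) implybT.
by rewrite rmorphM.
Qed.
Lemma cpowB (p a b : R) : 0 < p -> cpow p (a - b) = cpow p a / cpow p b.
Proof.
move=> p0; rewrite /cpow powRB; last by rewrite (gt_eqF p0) implybT.
by rewrite fmorph_div.
Qed.
Lemma cpow1 (p : R) : 0 <= p -> cpow p 1 = p%:C.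
Proof. by move=> p0; rewrite /cpow powRr1. Qed.
Lemma cpow0 (p : R) : cpow p 0 = 1.
Proof. by rewrite /cpow powRr0. Qed.
Lemma nc_cpow (p a : R) : nc (cpow p a) = p `^ a.
Proof. by rewrite /cpow ncR ger0_norm // powR_ge0. Qed.
Lemma cpow_neq0 (p a : R) : 0 < p -> cpow p a != 0.
Proof.
move=> p0; apply/negP => /eqP h.
have := nc_cpow p a; rewrite h nc0 => /esym/eqP; rewrite powR_eq0 gt_eqF //.
Qed.

Lemma cvg_neareq (f g : R -> C) (l : C) :
  f p @[p --> 0^'+] --> l -> (forall p, 0 < p -> f p = g p) ->
  g p @[p --> 0^'+] --> l.
Proof.
move=> /cvgCP hf eq; apply/cvgCP => e e0.
have hp0 := @nbhs_right_gt R 0.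
have := hf e e0 => hfe.
near=> p.
have p0 : 0 < p by near: p.
rewrite -eq //; near: p; exact: hfe.
Unshelve. all: by end_near.
Qed.

Lemma small_arg (X : R -> C) (K : C) (e : R) : 0 < e ->
  (forall p, 0 < p -> X p = K * cpow p e) -> X p @[p --> 0^'+] --> (0 : C).
Proof.
move=> e0 hX; apply: (@cvg_neareq (fun p => K * cpow p e)); last by move=> p /hX.
apply/cvgCP => eps eps0.
have hc := @powR_cvg0 R e e0.
move/cvgrPdist_lt : hc => /(_ (eps / (nc K + 1))).
have hK := nc_ge0 K.
have h0 : 0 < eps / (nc K + 1) by apply: divr_gt0; lra.
move=> /(_ h0) hc.
have hp0 := @nbhs_right_gt R 0.
near=> p.
have p0 : 0 < p by near: p.
have hp : `|0 - p `^ e| < eps / (nc K + 1) by near: p.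
rewrite sub0r normrN ger0_norm ?powR_ge0 // in hp.
rewrite sub0r ncN ncM nc_cpow.
have hpe := powR_ge0 p e.
rewrite ltr_pdivlMr in hp; last lra.
nra.
Unshelve. all: by end_near.
Qed.

Lemma cpow_cvg0 (e : R) : 0 < e -> cpow p e @[p --> 0^'+] --> (0 : C).
Proof.
move=> e0; exact: (@small_arg (fun p => cpow p e) 1 e e0 (fun p _ => esym (mul1r _))).
Qed.

Lemma cvg1_prod (I : Type) (r : seq I) (G : I -> R -> C) :
  (forall i, G i p @[p --> 0^'+] --> (1 : C)) ->
  (\prod_(i <- r) G i p) @[p --> 0^'+] --> (1 : C).
Proof.
move=> hG; elim: r => [|i r IH].
  under eq_fun => p do rewrite big_nil.
  exact: cvg_cst.
under eq_fun => p do rewrite big_cons.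
have h := cvgM (hG i) IH; rewrite mulr1 in h; exact: h.
Qed.
Lemma uniqC (f : R -> C) (a b : C) :
  f p @[p --> 0^'+] --> a -> f p @[p --> 0^'+] --> b -> a = b.
Proof. move=> ha hb; exact: (cvg_unique _ ha hb). Qed.

Lemma lc_one (F : R -> C) (v : R) (c : C) :
  F p @[p --> 0^'+] --> (1 : C) -> has_lc F v c -> c = 1.
Proof.
move=> hF [c0 hg].
case: (ltgtP v 0) => hv.
- have hv' : 0 < - v by rewrite oppr_gt0.
  have h := cvgM hF (@cpow_cvg0 (- v) hv'); have {}h := h (@at_right_proper_filter R 0); rewrite mulr0 in h.
  have h' : (fun x => F x / cpow x v) x @[x --> 0^'+] --> (0 : C).
    refine (@cvg_neareq _ (fun x => F x / cpow x v) 0 h _) => p p0 /=.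
    by rewrite -[- v]add0r cpowB // cpow0 mul1r.
  by move: c0; rewrite (@uniqC _ _ _ hg h') eqxx.
- have h := cvgM hg (@cpow_cvg0 v hv); have {}h := h (@at_right_proper_filter R 0); rewrite mulr0 in h.
  have h' : F x @[x --> 0^'+] --> (0 : C).
    refine (@cvg_neareq _ F 0 h _) => p p0 /=.
    by rewrite divfK // cpow_neq0.
  by have := @uniqC _ _ _ hF h' => /eqP; rewrite oner_eq0.
- subst v.
  have h' : (fun x => F x / cpow x 0) x @[x --> 0^'+] --> (1 : C).
    by apply: (@cvg_neareq F (fun x => F x / cpow x 0) 1 hF) => p p0 /=; rewrite cpow0 divr1.
  exact: (@uniqC _ _ _ hg h').
Qed.
Lemma cvgM1 (f g : R -> C) : f p @[p --> 0^'+] --> (1 : C) -> g p @[p --> 0^'+] --> (1 : C) ->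
  (f p * g p) @[p --> 0^'+] --> (1 : C).
Proof.
move=> hf hg; have h := cvgM hf hg; have {}h := h (@at_right_proper_filter R 0).
by rewrite mulr1 in h.
Qed.

Lemma cvgV1 (f : R -> C) : f p @[p --> 0^'+] --> (1 : C) -> (f p)^-1 @[p --> 0^'+] --> (1 : C).
Proof.
move=> hf; have h := cvgV (oner_neq0 _) hf; rewrite invr1 in h; exact: h.
Qed.

Lemma shM (A B z : C) (a ze : R) : 0 < 1 + a + ze ->
  (p%:C * (A * cpow p a) * (z * cpow p ze) / B) @[p --> 0^'+] --> (0 : C).
Proof.
move=> he; apply: (@small_arg _ (A * z / B) _ he) => p p0.
rewrite !cpowD // cpow1 ?ltW //; ring.
Qed.

Lemma sh1 (A B z : C) (a ze : R) : 0 < 1 + ze - a ->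
  (p%:C * B * (z * cpow p ze) / (A * cpow p a)) @[p --> 0^'+] --> (0 : C).
Proof.
move=> he; apply: (@small_arg _ (B * z / A) _ he) => p p0.
rewrite cpowB // cpowD // cpow1 ?ltW // !invfM; ring.
Qed.

Lemma shD (A B z : C) (a ze : R) : 0 < a - ze ->
  (A * cpow p a / (B * (z * cpow p ze))) @[p --> 0^'+] --> (0 : C).
Proof.
move=> he; apply: (@small_arg _ (A / (B * z)) _ he) => p p0.
rewrite cpowB // !invfM; ring.
Qed.

Lemma sh2 (A B z : C) (a ze : R) : 0 < - a - ze ->
  (B / (A * cpow p a * (z * cpow p ze))) @[p --> 0^'+] --> (0 : C).
Proof.
move=> he; apply: (@small_arg _ (B / (A * z)) _ he) => p p0.
rewrite cpowB // -[- a]add0r cpowB // cpow0 !invfM; ring.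
Qed.

Lemma Phi_to1 n (q z : C) (t : 'I_4 -> C) (u0 u1 : C) (alpha : 'I_6 -> R) (zeta : R) :
  1 < nc q ->
  (forall i : 'I_6, 0 < 1 + alpha i + zeta /\ 0 < alpha i - zeta) ->
  0 < 1 + zeta - alpha (inord 4) -> 0 < - alpha (inord 4) - zeta ->
  Phi_sub n q z t u0 u1 alpha zeta p @[p --> 0^'+] --> (1 : C).
Proof.
move=> hq ha h1 h2.
have hq0 : 0 < nc (q^-1) by rewrite ncV invr_gt0; lra.
have hq1 : nc (q^-1) < 1 by rewrite ncV invf_lt1 //; lra.
rewrite /Phi_sub /Phi.
apply: cvgM1.
  apply: cvgV1; apply: cvg1_prod => k; apply: cvgM1; apply: qpoch_to1.
    exact: sh1.
  exact: sh2.
apply: cvgV1.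
apply: cvgM1; last first.
  apply: cvg1_prod => r; apply: cvgM1; apply: qpoch2_to1 => //.
    by apply: shM; case: (ha (ord4to6 r)).
  by apply: shD; case: (ha (ord4to6 r)).
apply: cvgM1; first apply: cvgM1; first apply: cvgM1.
- apply: qpoch2_to1 => //; apply: shM; by case: (ha (inord 4)).
- apply: qpoch2_to1 => //; apply: shD; by case: (ha (inord 4)).
- apply: qpoch2_to1 => //; apply: shM; by case: (ha (inord 5)).
- apply: qpoch2_to1 => //; apply: shD; by case: (ha (inord 5)).
Qed.
End S.

Theorem proposition4p3 (R : realType) (n : nat) (q : Cx R)
  (t : 'I_4 -> Cx R) (u0 u1 : Cx R) (alpha : 'I_6 -> R) (zeta : R) :
  1 < `|q| ->
  (forall r, t r != 0) -> u0 != 0 -> u1 != 0 ->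
  inP alpha zeta ->
  (forall r : 'I_6, alpha r + 1/2 != `|zeta + 1/2|) ->
  alpha (inord 4) + `|zeta + 1/2| < 1/2 ->
  forall (z1 z2 : Cx R) (v1 v2 : R) (c1 c2 : Cx R),
    z1 != 0 -> z2 != 0 ->
    has_lc (Phi_sub n q z1 t u0 u1 alpha zeta) v1 c1 ->
    has_lc (Phi_sub n q z2 t u0 u1 alpha zeta) v2 c2 ->
    c1 = c2.
Proof.
move=> Hq _ _ _ [_ _ hal _ _] hne h4 z1 z2 v1 v2 c1 c2 _ _ hl1 hl2.
have hq : 1 < nc R q.
  have : ((1 : R)%:C : Cx R) < (nc R q)%:C by rewrite -(@ncE R q).
  by rewrite ltcR.
set s := zeta + 1/2.
have hs1 : s <= `|s| := ler_norm s.
have hs2 : - s <= `|s| by rewrite -normrN; exact: ler_norm.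
have ha : forall i : 'I_6, 0 < 1 + alpha i + zeta /\ 0 < alpha i - zeta.
  move=> i; have hi : `|s| - 1/2 <= alpha i by have := hal i; rewrite [1/2 + zeta]addrC.
  have hi' : `|s| < alpha i + 1/2.
    by rewrite lt_neqAle eq_sym hne /=; lra.
  rewrite /s in hs1 hs2 hi'; split; lra.
rewrite -/s in h4.
have hb1 : 0 < 1 + zeta - alpha (inord 4) by rewrite /s in hs1 hs2 h4; lra.
have hb2 : 0 < - alpha (inord 4) - zeta by rewrite /s in hs1 hs2 h4; lra.
rewrite (@lc_one R _ _ _ (@Phi_to1 R n q z1 t u0 u1 alpha zeta hq ha hb1 hb2) hl1).
by rewrite (@lc_one R _ _ _ (@Phi_to1 R n q z2 t u0 u1 alpha zeta hq ha hb1 hb2) hl2).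
Qed.
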